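(* If a set $\Phi\subseteq\mathrm{FO}\cup{\sim}\mathrm{FO}$ is unsatisfiable in team semantics, then some finite subset of $\Phi$ is unsatisfiable.
   Context: Fix a countable vocabulary $\tau$ and a countably infinite set of variables. $\mathrm{FO}$: first-order $\tau$-formulas (built with $\neg,\to,\forall x$); ${\sim}\mathrm{FO}=\{{\sim}\alpha:\alpha\in\mathrm{FO}\}$. A valuation is $(\mathcal A,T)$ with $\mathcal A$ a $\tau$-structure with nonempty domain and $T$ a (possibly empty) set of assignments of domain elements to the variables. For $\alpha\in\mathrm{FO}$, $(\mathcal A,T)\models\alpha$ iff $(\mathcal A,s)\models\alpha$ classically for all $s\in T$; $(\mathcal A,T)\models{\sim}\alpha$ iff $(\mathcal A,T)\not\models\alpha$. A set is satisfiable if some valuation satisfies all its members. *)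

(* Defs.v *)
From Stdlib Require Import List Arith Fin.
Import ListNotations.
Set Implicit Arguments.

Record vocab := Vocab {
  fsym : Type;
  rsym : Type;
  far : fsym -> nat;
  rar : rsym -> nat
}.

Definition countable_vocab (tau : vocab) : Prop :=
  (exists c : fsym tau -> nat, forall f g, c f = c g -> f = g) /\
  (exists c : rsym tau -> nat, forall r q, c r = c q -> r = q).

Definition var := nat.

Inductive term (tau : vocab) : Type :=
| Tvar : var -> term tau
| Tfun : forall f : fsym tau, (Fin.t (@far tau f) -> term tau) -> term tau.

Inductive fo (tau : vocab) : Type :=
| FEq : term tau -> term tau -> fo tau
| FRel : forall r : rsym tau, (Fin.t (@rar tau r) -> term tau) -> fo tau
| FNot : fo tau -> fo tau
| FImp : fo tau -> fo tau -> fo tau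
| FAll : var -> fo tau -> fo tau.

Record structure (tau : vocab) := Structure {
  dom : Type;
  dom_inh : inhabited dom;
  fint : forall f : fsym tau, (Fin.t (@far tau f) -> dom) -> dom;
  rint : forall r : rsym tau, (Fin.t (@rar tau r) -> dom) -> Prop
}.

Definition assignment tau (A : structure tau) := var -> dom A.

Definition upd tau (A : structure tau) (s : assignment A) (x : var) (d : dom A)
  : assignment A := fun y => if Nat.eqb y x then d else s y.

Fixpoint teval tau (A : structure tau) (s : assignment A) (t : term tau) : dom A :=
  match t with
  | Tvar _ x => s x
  | Tfun f args => fint A f (fun i => teval s (args i))
  end.

Fixpoint sat tau (A : structure tau) (s : assignment A) (phi : fo tau) : Prop :=
  match phi with
  | FEq t1 t2 => teval s t1 = teval s t2
  | FRel r args => rint A r (fun i => teval s (args i))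
  | FNot psi => ~ sat s psi
  | FImp psi chi => sat s psi -> sat s chi
  | FAll x psi => forall d : dom A, sat (upd s x d) psi
  end.

Inductive sform (tau : vocab) : Type :=
| Pos : fo tau -> sform tau
| Neg : fo tau -> sform tau.         (* ~alpha (weak contradictory negation) *)

Definition team tau (A : structure tau) := assignment A -> Prop.

Definition tsat tau (A : structure tau) (T : team A) (phi : sform tau) : Prop :=
  match phi with
  | Pos a => forall s, T s -> sat s a
  | Neg a => ~ (forall s, T s -> sat s a)
  end.

Definition satisfiable tau (Phi : sform tau -> Prop) : Prop :=
  exists (A : structure tau) (T : team A), forall phi, Phi phi -> tsat T phi.

Definition list_satisfiable tau (l : list (sform tau)) : Prop :=
  exists (A : structure tau) (T : team A), forall phi, In phi l -> tsat T phi.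

(* Main.v *)
Require Import Defs.
From Stdlib Require Import List.
From mathcomp Require Import all_boot classical_sets boolp filter.
From Stdlib Require Import ClassicalEpsilon FunctionalExtensionality PropExtensionality ProofIrrelevance.

Lemma my_ultra (J I : Type) (D : J -> Prop) (B : J -> I -> Prop) :
  (exists j, D j) ->
  (forall j k, D j -> D k -> exists m, D m /\ forall i, B m i -> B j i /\ B k i) ->
  (forall j, D j -> exists i, B j i) ->
  exists U : (I -> Prop) -> Prop,
    (forall j, D j -> U (B j)) /\
    (forall X Y, U X -> U Y -> U (fun i => X i /\ Y i)) /\
    (forall X Y : I -> Prop, (forall i, X i -> Y i) -> U X -> U Y) /\
    ~ U (fun _ => False) /\
    (forall X, U X \/ U (fun i => ~ X i)).
Proof.
move=> hD hdir hne.
have FF : Filter (filter_from D B).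
  apply: filter_from_filter => //.
  move=> j k Dj Dk; have [m [Dm Hm]] := hdir j k Dj Dk.
  by exists m => // i /Hm.
have PF : ProperFilter (filter_from D B).
  by apply: filter_from_proper => j /hne [i Bi]; exists i.
have [U [UU sub]] := ultraFilterLemma PF.
exists U; split; [|split; [|split; [|split]]].
- by move=> j Dj; apply: sub; exists j.
- by move=> X Y UX UY; apply: (@filterI _ U _ X Y).
- by move=> X Y XY; apply: filterS.
- by move=> H; apply: (@filter_not_empty _ U _).
- by move=> X; apply: in_ultra_setVsetC.
Qed.

Section Ultra.
Variable tau : vocab.
Variable I : Type.
Variable A : I -> structure tau.
Variable U : (I -> Prop) -> Prop.
Hypothesis UI : forall X Y, U X -> U Y -> U (fun i => X i /\ Y i).
Hypothesis UM : forall X Y : I -> Prop, (forall i, X i -> Y i) -> U X -> U Y.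
Hypothesis U0 : ~ U (fun _ => False).
Hypothesis UD : forall X, U X \/ U (fun i => ~ X i).

Lemma Ufull X : (forall i, X i) -> U X.
Proof.
intro H. destruct (UD X) as [h|h]; [exact h|].
apply (UM (fun i => ~ X i)); [intros i _; apply H|exact h].
Qed.

Lemma Unot X : ~ U X <-> U (fun i => ~ X i).
Proof.
split.
- intro h. destruct (UD X); [contradiction|assumption].
- intros h1 h2. apply U0. apply (UM _ _ (fun i (p : X i /\ ~ X i) => proj2 p (proj1 p))).
  apply UI; assumption.
Qed.

Lemma Uiff_on E X Y : U E -> (forall i, E i -> (X i <-> Y i)) -> (U X <-> U Y).
Proof.
intros hE h; split; intro hx.
- apply (UM (fun i => E i /\ X i)); [intros i [e x]; apply (h i e); exact x|apply UI; assumption].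
- apply (UM (fun i => E i /\ Y i)); [intros i [e x]; apply (h i e); exact x|apply UI; assumption].
Qed.

Lemma fin_U n (P : Fin.t n -> I -> Prop) : (forall k, U (P k)) -> U (fun i => forall k, P k i).
Proof.
induction n as [|n IH].
- intros _. apply Ufull. intros i k. inversion k.
- intros H. apply (UM (fun i => P Fin.F1 i /\ (forall k, P (Fin.FS k) i))).
  + intros i [h1 h2] k. apply (Fin.caseS' k (fun k => P k i)); [exact h1|exact h2].
  + apply UI; [apply H|]. apply (IH (fun k => P (Fin.FS k))). intro k; apply H.
Qed.

Definition prodT := forall i, dom (A i).
Definition ueq (f g : prodT) : Prop := U (fun i => f i = g i).
Definition udom := {P : prodT -> Prop | exists f, P = ueq f}.
Definition cls (f : prodT) : udom := exist _ (ueq f) (ex_intro _ f Logic.eq_refl).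

Lemma ueq_refl f : ueq f f.
Proof. apply Ufull; reflexivity. Qed.
Lemma ueq_sym f g : ueq f g -> ueq g f.
Proof. apply UM. intros i h; symmetry; exact h. Qed.
Lemma ueq_trans f g h : ueq f g -> ueq g h -> ueq f h.
Proof. intros a b. apply (UM _ _ (fun i (p : f i = g i /\ g i = h i) => eq_trans (proj1 p) (proj2 p))). apply UI; assumption. Qed.

Lemma cls_eq f g : cls f = cls g <-> ueq f g.
Proof.
split.
- intro h. assert (e : ueq f = ueq g) by exact (f_equal (@proj1_sig _ _) h).
  rewrite e. apply ueq_sym, ueq_refl.
- intro h. unfold cls.
  assert (e : ueq f = ueq g).
  { apply functional_extensionality; intro k; apply propositional_extensionality; split; intro q.
    - exact (ueq_trans _ _ _ (ueq_sym _ _ h) q).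
    - exact (ueq_trans _ _ _ h q). }
  revert e. generalize (ex_intro (fun f0 => ueq f = ueq f0) f Logic.eq_refl).
  generalize (ex_intro (fun f0 => ueq g = ueq f0) g Logic.eq_refl).
  intros p q e. destruct e. f_equal. apply proof_irrelevance.
Qed.

Definition rep (x : udom) : prodT := proj1_sig (constructive_indefinite_description _ (proj2_sig x)).

Lemma cls_rep x : cls (rep x) = x.
Proof.
unfold rep. destruct (constructive_indefinite_description _ (proj2_sig x)) as [f hf]. simpl.
destruct x as [P hP]. simpl in hf. subst P. unfold cls. f_equal. apply proof_irrelevance.
Qed.

Lemma rep_cls f : ueq (rep (cls f)) f.
Proof. apply cls_eq. apply cls_rep. Qed.

Definition pick i : dom (A i) := epsilon (dom_inh (A i)) (fun _ => True).

Definition UP : structure tau :=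
  @Structure tau udom (inhabits (cls pick))
    (fun F args => cls (fun i => fint (A i) F (fun k => rep (args k) i)))
    (fun R args => U (fun i => rint (A i) R (fun k => rep (args k) i))).

Definition Ulift (s : forall i, assignment (A i)) : assignment UP :=
  fun v => cls (fun i => s i v).

Lemma teval_U s t : teval (Ulift s) t = cls (fun i => teval (s i) t).
Proof.
induction t as [v|F args IH].
- reflexivity.
- simpl. apply cls_eq. unfold ueq.
  apply (UM (fun i => forall k, rep (teval (Ulift s) (args k)) i = teval (s i) (args k))).
  + intros i h. f_equal. apply functional_extensionality. exact h.
  + apply fin_U. intro k. rewrite IH. apply rep_cls.
Qed.

Lemma upd_U s x g : upd (Ulift s) x (cls g) = Ulift (fun i => upd (s i) x (g i)).
Proof.
apply functional_extensionality; intro v. unfold upd, Ulift. destruct (Nat.eqb v x); reflexivity.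
Qed.

Lemma los phi : forall s, sat (Ulift s) phi <-> U (fun i => sat (s i) phi).
Proof.
induction phi as [t1 t2|R args|psi IH|psi IH1 chi IH2|x psi IH]; intro s; simpl.
- rewrite !teval_U. apply cls_eq.
- apply (Uiff_on (fun i => forall k, rep (teval (Ulift s) (args k)) i = teval (s i) (args k))).
  + apply fin_U. intro k. rewrite teval_U. apply rep_cls.
  + intros i h. assert (e : (fun k => rep (teval (Ulift s) (args k)) i) = (fun k => teval (s i) (args k)))
      by (apply functional_extensionality; exact h).
    rewrite e. tauto.
- rewrite IH. apply Unot.
- rewrite IH1 IH2. split.
  + intro h. destruct (UD (fun i => sat (s i) psi)) as [hx|hx].
    * apply (UM _ _ (fun i y (_ : sat (s i) psi) => y)). exact (h hx).
    * apply (UM _ _ (fun i (n : ~ sat (s i) psi) y => False_ind _ (n y))). exact hx.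
  + intros h hx. apply (UM _ _ (fun i (p : (sat (s i) psi -> sat (s i) chi) /\ sat (s i) psi) => proj1 p (proj2 p))).
    apply UI; assumption.
- split.
  + intro h. destruct (UD (fun i => forall d, sat (upd (s i) x d) psi)) as [hy|hy]; [exact hy|].
    exfalso.
    set (g := fun i => epsilon (dom_inh (A i)) (fun d => ~ sat (upd (s i) x d) psi)).
    specialize (h (cls g)). rewrite upd_U IH in h.
    apply U0. refine (UM _ _ _ (UI _ _ h hy)).
    intros i [h1 h2]. apply h2. intro d.
    destruct (Classical_Prop.classic (sat (upd (s i) x d) psi)) as [c|c]; [exact c|].
    exfalso. apply (epsilon_spec (dom_inh (A i)) (fun d => ~ sat (upd (s i) x d) psi) (ex_intro _ d c)).
    exact h1.
  + intros h d. rewrite -(cls_rep d) upd_U IH.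
    refine (UM _ _ _ h). intros i hi. apply hi.
Qed.

End Ultra.

Theorem mainTheorem12 (tau : vocab) (Htau : countable_vocab tau)
  (Phi : sform tau -> Prop) :
  ~ satisfiable Phi ->
  exists l : list (sform tau), (forall phi, In phi l -> Phi phi) /\ ~ list_satisfiable l.
Proof.
intro hns.
apply Classical_Prop.NNPP. intro hno. apply hns.
assert (hall : forall l : list (sform tau), (forall phi, In phi l -> Phi phi) -> list_satisfiable l).
{ intros l hl. apply Classical_Prop.NNPP. intro hn. apply hno. exists l. split; assumption. }
set (I := {l : list (sform tau) | forall phi, In phi l -> Phi phi}).
assert (hA : forall i : I, exists (A : structure tau) (T : team A), forall phi, In phi (proj1_sig i) -> tsat T phi)
  by (intro i; apply hall; exact (proj2_sig i)).
set (A := fun i => proj1_sig (constructive_indefinite_description _ (hA i))).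
assert (hT : forall i, exists T : team (A i), forall phi, In phi (proj1_sig i) -> tsat T phi)
  by (intro i; exact (proj2_sig (constructive_indefinite_description _ (hA i)))).
set (T := fun i => proj1_sig (constructive_indefinite_description _ (hT i))).
assert (hTs : forall i phi, In phi (proj1_sig i) -> tsat (T i) phi)
  by (intro i; exact (proj2_sig (constructive_indefinite_description _ (hT i)))).
destruct (@my_ultra (list (sform tau)) I (fun F => forall phi, In phi F -> Phi phi)
            (fun F i => forall phi, In phi F -> In phi (proj1_sig i))) as [U [UB [UI [UM [U0 UD]]]]].
- exists nil. intros phi [].
- intros j k hj hk. exists (j ++ k). split.
  + intros phi h. apply in_app_or in h. destruct h; auto.
  + intros i h. split; intros phi q; apply h; apply in_or_app; auto.
- intros j hj. exists (exist _ j hj). simpl. auto.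
- set (asg := fun i : I => fun _ : var => @pick tau I A i).
  set (sb := fun (b : fo tau) (i : I) => epsilon (inhabits (asg i)) (fun s => T i s /\ ~ sat s b)).
  assert (hsb : forall b i, In (Neg b) (proj1_sig i) -> T i (sb b i) /\ ~ sat (sb b i) b).
  { intros b i h. apply (epsilon_spec (inhabits (asg i)) (fun s => T i s /\ ~ sat s b)).
    pose proof (hTs i _ h) as hn. simpl in hn.
    apply Classical_Prop.NNPP. intro hne. apply hn. intros s hs.
    apply Classical_Prop.NNPP. intro hs2. apply hne. exists s. split; assumption. }
  exists (UP tau I A U).
  exists (fun a => exists b, Phi (Neg b) /\ a = Ulift tau I A U (sb b)).
  intros phi hphi. destruct phi as [g|b]; simpl.
  + intros a [b [hb ->]]. apply (los tau I A U UI UM U0 UD).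
    refine (UM _ _ _ (UB (Pos g :: Neg b :: nil) _)).
    * intros i hi. apply (hTs i (Pos g)); [apply hi; simpl; auto|].
      apply (proj1 (hsb b i (hi _ ltac:(simpl; auto)))).
    * intros p [<-|[<-|[]]]; assumption.
  + intro h. specialize (h (Ulift tau I A U (sb b)) (ex_intro _ b (conj hphi Logic.eq_refl))).
    apply (los tau I A U UI UM U0 UD) in h. apply U0.
    refine (UM _ _ _ (UI _ _ h (UB (Neg b :: nil) _))).
    * intros i [h1 h2]. apply (proj2 (hsb b i (h2 _ ltac:(simpl; auto)))). exact h1.
    * intros p [<-|[]]; assumption.
Qed.
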